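(* Let $G$ be a finite group and $H$ a normal subgroup of $G$ with $|H|$ odd. Then $\Gamma_{G,H}$ admits a perfect code.
   Context: For a normal subgroup $H$ of a finite group $G$ with identity $e$, the subgroup sum graph $\Gamma_{G,H}$ is the simple undirected graph with vertex set $G$ in which distinct vertices $x,y$ are adjacent if and only if $xy\in H\setminus\{e\}$. A perfect code in a graph is a set $C$ of vertices that is independent and such that every vertex not in $C$ is adjacent to exactly one vertex of $C$. *)

(* Defs.v *)
From mathcomp Require Import all_boot all_fingroup.
Set Implicit Arguments. Unset Strict Implicit. Unset Printing Implicit Defensive.
Local Open Scope group_scope.

(* Subgroup sum graph Gamma_{G,H}: vertex set G; distinct x, y adjacent iff
   x * y \in H \ {1}.  G, H are groups inside an ambient finGroupType gT. *)
Definition ssg_adj (gT : finGroupType) (H : {set gT}) (x y : gT) : bool :=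
  (x != y) && (x * y \in H^#).

Definition ssg_perfect_code (gT : finGroupType) (G H C : {set gT}) : Prop :=
  [/\ C \subset G,
      (forall x y, x \in C -> y \in C -> ~~ ssg_adj H x y) &
      (forall x, x \in G -> x \notin C ->
         #|[set c in C | ssg_adj H x c]| = 1)%N].

(* Main.v *)
Require Import Defs.
From mathcomp Require Import all_boot all_fingroup.
Local Open Scope group_scope.

Lemma swapH (gT : finGroupType) (H : {group gT}) (x y : gT) :
  x \in 'N(H) -> (x * y \in H) = (y * x \in H).
Proof.
by move=> nx; rewrite -(memJ_norm (x * y) nx) conjgE mulgA mulKg.
Qed.
Arguments swapH {gT H x y}.

Theorem corollary3p2 (gT : finGroupType) (G H : {group gT}) :
  H <| G -> odd #|H| ->
  exists C : {set gT}, ssg_perfect_code G H C.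
Proof.
case/andP=> sHG nHG oddH.
have nG : forall x, x \in G -> x \in 'N(H) by move=> x xG; exact: (subsetP nHG).
pose cls (c d : gT) := (d * c^-1 \in H) || (d * c \in H).
pose g (c : gT) := if [pick d in G | cls c d && (d ^+ 2 == 1)] is Some d then d
                   else odflt c [pick d in G | cls c d].
have clsS : forall c d, c \in G -> d \in G -> cls c d = cls d c.
  move=> c d cG dG; rewrite /cls.
  have -> : (d * c^-1 \in H) = (c * d^-1 \in H).
    by rewrite -groupV invMg invgK.
  by rewrite (swapH (nG _ dG)).
have clsT : forall c d e, c \in G -> d \in G -> e \in G ->
    cls c d -> cls d e -> cls c e.
  move=> c d e cG dG eG; rewrite /cls.
  case/orP=> h1; case/orP=> h2.
  - apply/orP; left.
    have E : e * c^-1 = (e * d^-1) * (d * c^-1) by rewrite !mulgA mulgKV.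
    by rewrite E groupM.
  - apply/orP; right.
    have E : e * c = (e * d) * (d^-1 * c) by rewrite !mulgA mulgK.
    rewrite E groupM //.
    rewrite -groupV invMg invgK.
    by rewrite -(swapH (nG _ dG)).
  - apply/orP; right.
    have E : e * c = (e * d^-1) * (d * c) by rewrite !mulgA mulgKV.
    by rewrite E groupM.
  - apply/orP; left.
    have E : e * c^-1 = (e * d) * (d^-1 * c^-1) by rewrite !mulgA mulgK.
    rewrite E groupM //.
    by rewrite -invMg groupV (swapH (nG _ cG)).
have clsR : forall c, cls c c by move=> c; rewrite /cls mulgV group1.
have clsE : forall c d x, c \in G -> d \in G -> x \in G -> cls c d ->
    cls c x = cls d x.
  move=> c d x cG dG xG cd; apply/idP/idP=> h.
  - by apply: (clsT d c x) => //; rewrite clsS.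
  - exact: (clsT c d x).
have gP : forall c, c \in G -> (g c \in G) && cls c (g c).
  move=> c cG; rewrite /g.
  case: pickP => [d /andP[dG /andP[-> _]] | _]; first by rewrite dG.
  case: pickP => [d /andP[dG ->] | _] /=; first by rewrite dG.
  by rewrite cG clsR.
have gE : forall c d, c \in G -> d \in G -> cls c d -> g d = g c.
  move=> c d cG dG cd; rewrite /g.
  have e1 : [pred x in G | cls d x && (x ^+ 2 == 1)] =1
            [pred x in G | cls c x && (x ^+ 2 == 1)].
    move=> x /=; case xG: (x \in G) => //=.
    by rewrite (clsE c d x).
  have e2 : [pred x in G | cls d x] =1 [pred x in G | cls c x].
    move=> x /=; case xG: (x \in G) => //=.
    by rewrite (clsE c d x).
  rewrite (eq_pick e1) (eq_pick e2).
  case: pickP => // _.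
  case: pickP => // Hn.
  by have := Hn d; rewrite /= dG cd.
have g2 : forall c, c \in G -> c ^+ 2 \in H -> g c ^+ 2 = 1.
  move=> c cG c2H; rewrite /g.
  case: pickP => [d /andP[_ /andP[_ /eqP //]] | Hn].
  pose o := #[c ^+ 2].
  have oo : odd o.
    apply: dvdn_odd oddH; apply: cardSg; by rewrite cycle_subG.
  have := Hn (c ^+ o); rewrite /= groupX // /cls.
  have -> : c ^+ o ^+ 2 = 1.
    by rewrite -expgM mulnC expgM expg_order.
  have -> : c ^+ o * c^-1 \in H.
    rewrite -(odd_double_half o) oo add1n expgSr mulgK -mul2n expgM.
    exact: groupX.
  by rewrite eqxx.
have inv2 : forall a : gT, a ^+ 2 = 1 -> a^-1 = a.
  by move=> a a2; apply/eqP; rewrite eq_invg_mul -expg2 a2.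
have swapG : forall x y, x \in G -> (x * y \in H) = (y * x \in H).
  by move=> x y xG; exact: swapH (nG _ xG).
exists [set c in G | (c == g c) || (c == (g c)^-1)].
split.
- by apply/subsetP=> c; rewrite inE => /andP[].
- move=> x y; rewrite !inE => /andP[xG xC] /andP[yG yC].
  rewrite /ssg_adj in_setD1; apply/negP => /and3P[xy x1 xyH].
  have cxy : cls x y by rewrite /cls -(swapG x y) // xyH orbT.
  have gyx := gE x y xG yG cxy.
  rewrite gyx in yC.
  move: xy x1; set g0 := g x in xC yC *.
  case/orP: xC => /eqP E1; case/orP: yC => /eqP E2; rewrite E1 E2;
    by rewrite ?mulgV ?mulVg ?eqxx.
- move=> x xG; rewrite inE xG /= negb_or => /andP[nx1 nx2].
  set g0 := g x.
  have /andP[g0G cg0] := gP x xG.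
  pose y0 := if g0 * x \in H then g0 else g0^-1.
  have xy0H : x * y0 \in H.
    rewrite /y0; case: ifP => [h | h]; first by rewrite swapG.
    move: cg0; rewrite /cls h orbF => h2.
    by rewrite -groupV invMg invgK.
  have y0G : y0 \in G by rewrite /y0; case: ifP; rewrite ?groupV.
  have cy0 : cls x y0 by rewrite /cls -(swapG x y0) // xy0H orbT.
  have gy0 : g y0 = g0 := gE x y0 xG y0G cy0.
  rewrite (_ : [set c in _ | _] = [set y0]) ?cards1 //.
  apply/setP=> c; rewrite !inE /ssg_adj in_setD1.
  apply/idP/eqP.
  + case/and3P=> /andP[cG cC] xc /andP[xc1 xcH].
    have cxc : cls x c by rewrite /cls -(swapG x c) // xcH orbT.
    have gc := gE x c xG cG cxc.
    rewrite gc in cC; rewrite /y0; case: ifP => h.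
    * case/orP: cC => /eqP cE; first by rewrite cE.
      rewrite cE in xcH.
      have x2 : x ^+ 2 \in H.
        have -> : x ^+ 2 = (x * (g x)^-1) * (g x * x)
          by rewrite expgS expg1 mulgA mulgKV.
        by rewrite groupM.
      by rewrite cE inv2 // g2.
    * case/orP: cC => /eqP cE; last by rewrite cE.
      by move: xcH; rewrite cE swapG // h.
  + move=> ->; rewrite y0G xy0H /= gy0.
    have y0C : (y0 == g0) || (y0 == g0^-1)
      by rewrite /y0; case: ifP => _; rewrite eqxx ?orbT.
    rewrite y0C andbT /=; apply/andP; split.
    * apply/negP=> /eqP xy; move: nx1 nx2; rewrite -/g0 xy.
      by case/orP: y0C => /eqP ->; rewrite eqxx.
    * apply/negP=> /eqP xy1.
      have xe : x = y0^-1 by rewrite -(mulgK y0 x) xy1 mul1g.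
      move: nx1 nx2; rewrite -/g0 xe.
      by case/orP: y0C => /eqP ->; rewrite ?invgK eqxx.
Qed.
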